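(* Let $\mathbb F$ be an algebraically closed field and let $A=\sigma(\mathbb F)\langle x_1,\dots,x_n\rangle$ be a quasi-commutative bijective skew PBW extension of $\mathbb F$. Assume that the center $Z(A)$ is a polynomial ring in $n$ variables over $\mathbb F$, i.e. $Z(A)=\mathbb F[y_1,\dots,y_n]$ for some algebraically independent elements $y_1,\dots,y_n\in Z(A)$. Let $I$ be a two-sided ideal of $A$ and put $J:=I\cap Z(A)$ (the preimage of $I$ under the inclusion $Z(A)\hookrightarrow A$). Then $$\big\langle I_{Z(A)}(V_{Z(A)}(J))\big\rangle\subseteq\sqrt{I}\subseteq I(V(I)),$$ where $\langle\,\cdot\,\rangle$ denotes the two-sided ideal of $A$ generated by a subset.
   Context: Skew PBW extension: a ring $A$ is a skew PBW extension of a ring $R$, written $A=\sigma(R)\langle x_1,\dots,x_n\rangle$, if (1) $R\subseteq A$ is a subring; (2) there are $x_1,\dots,x_n\in A$ such that $A$ is a free left $R$-module with basis $\mathrm{Mon}(A)=\{x_1^{\alpha_1}\cdots x_n^{\alpha_n}:\alpha\in\mathbb N^n\}$; (3) for every $i$ and every $r\in R\setminus\{0\}$ there is $c_{i,r}\in R\setminus\{0\}$ with $x_ir-c_{i,r}x_i\in R$; (4) for every $i,j$ there is $c_{i,j}\in R\setminus\{0\}$ with $x_jx_i-c_{i,j}x_ix_j\in R+Rx_1+\cdots+Rx_n$. For each $i$ there are then an injective ring endomorphism $\sigma_i$ of $R$ and a $\sigma_i$-derivation $\delta_i$ with $x_ir=\sigma_i(r)x_i+\delta_i(r)$. $A$ is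 bijective if every $\sigma_i$ is bijective and every $c_{i,j}$ is invertible. $A$ is quasi-commutative if (3),(4) are replaced by: $x_ir=c_{i,r}x_i$ for some $c_{i,r}\in R\setminus\{0\}$, and $x_jx_i=c_{i,j}x_ix_j$ for some $c_{i,j}\in R\setminus\{0\}$. Roots, vanishing sets, ideals of points in $A$: for $Z=(z_1,\dots,z_n)\in\mathbb F^n$, $\langle Z\rangle$ is the two-sided ideal of $A$ generated by $x_1-z_1,\dots,x_n-z_n$; $f\in A$ has root $Z$ iff $f\in\langle Z\rangle$. $V(I)=\{Z\in\mathbb F^n: f\in\langle Z\rangle\ \forall f\in I\}$ and, for $X\subseteq\mathbb F^n$, $I(X)=\{g\in A: g\in\langle Z\rangle\ \forall Z\in X\}$. In the commutative polynomial ring $Z(A)=\mathbb F[y_1,\dots,y_n]$: $V_{Z(A)}(J)=\{a\in\mathbb F^n: g(a)=0\ \forall g\in J\}$ (classical evaluation, equivalently $g$ lies in the ideal generated by $y_1-a_1,\dots,y_n-a_n$), and for $X\subseteq\mathbb F^n$, $I_{Z(A)}(X)=\{g\in Z(A): g(a)=0\ \forall a\in X\}$. Radical: a proper two-sided ideal $P$ of a ring $S$ is prime if for all left ideals $L,K$ of $S$, $LK\subseteq P$ implies $L\subseteq P$ or $K\subseteq P$. For a two-sided ideal $I$ of $A$, $\sqrt{I}$ is the intersection of all prime ideals of $A$ containing $I$ (with $\sqrt{A}=A$). *)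

(* Defs.v *)
From HB Require Import structures.
From mathcomp Require Import all_boot all_order all_algebra.
From mathcomp Require Import mpoly.
Set Implicit Arguments. Unset Strict Implicit. Unset Printing Implicit Defensive.
Import GRing.Theory.
Local Open Scope ring_scope.

Section Ideals.
Variable A : nzRingType.

Definition subsetP (S T : A -> Prop) := forall a, S a -> T a.

Definition left_ideal (L : A -> Prop) :=
  [/\ L 0, (forall a b, L a -> L b -> L (a - b)) & (forall r a, L a -> L (r * a))].

Definition two_sided_ideal (P : A -> Prop) :=
  [/\ P 0, (forall a b, P a -> P b -> P (a - b)),
      (forall r a, P a -> P (r * a)) & (forall r a, P a -> P (a * r))].

Definition gen_ideal (S : A -> Prop) (a : A) : Prop :=
  forall P, two_sided_ideal P -> subsetP S P -> P a.

Definition ideal_prod (L K : A -> Prop) (a : A) : Prop :=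
  exists s : seq (A * A),
    (forall u, u \in s -> L u.1 /\ K u.2) /\ a = \sum_(u <- s) u.1 * u.2.

Definition prime_ideal (P : A -> Prop) :=
  [/\ two_sided_ideal P, ~ (forall a, P a) &
      forall L K, left_ideal L -> left_ideal K ->
        subsetP (ideal_prod L K) P -> subsetP L P \/ subsetP K P].

Definition radical (I : A -> Prop) (a : A) : Prop :=
  forall P, prime_ideal P -> subsetP I P -> P a.

Definition center (a : A) : Prop := forall b, a * b = b * a.

End Ideals.

Section SkewPBW.
Variables (F : fieldType) (A : nzRingType) (n : nat).
Variables (iota : {rmorphism F -> A}) (x : 'I_n -> A).

(* the element  \sum_alpha p_alpha x_1^alpha_1 ... x_n^alpha_n  of A
   (coefficients on the left, ordered monomials) *)
Definition lin_mon (p : {mpoly F[n]}) : A := mmap iota x p.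

Definition qc_bijective_skewPBW : Prop :=
  [/\ injective iota,
      (* A is a free left F-module with basis Mon(A) *)
      bijective lin_mon,
      (forall i (r : F), r != 0 ->
         exists2 c : F, c != 0 & x i * iota r = iota c * x i),
      (forall i j, exists2 c : F, (c != 0) && (c \is a GRing.unit) &
         x j * x i = iota c * (x i * x j)) &
      (forall i, exists2 sigma : F -> F,
         (forall r, x i * iota r = iota (sigma r) * x i) & bijective sigma)].

Definition point_ideal (z : 'I_n -> F) : A -> Prop :=
  gen_ideal (fun a => exists i, a = x i - iota (z i)).

Definition V_A (I : A -> Prop) (z : 'I_n -> F) : Prop :=
  forall f, I f -> point_ideal z f.

Definition I_A (X : ('I_n -> F) -> Prop) (g : A) : Prop :=
  forall z, X z -> point_ideal z g.

End SkewPBW.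

Section CenterPoly.
Variables (F : fieldType) (n : nat).

Definition V_Z (J : {mpoly F[n]} -> Prop) (a : 'I_n -> F) : Prop :=
  forall g, J g -> g.@[a] = 0.

Definition I_Z (X : ('I_n -> F) -> Prop) (g : {mpoly F[n]}) : Prop :=
  forall a, X a -> g.@[a] = 0.

End CenterPoly.

(* Main.v *)
Require Import Defs.
From HB Require Import structures.
From mathcomp Require Import all_boot all_order all_algebra.
From mathcomp Require Import mpoly.
From Stdlib Require Import Classical FunctionalExtensionality.
From mathcomp Require Import ring.
Set Implicit Arguments. Unset Strict Implicit. Unset Printing Implicit Defensive.
Import GRing.Theory.
Local Open Scope ring_scope.
Definition cprime (R : comNzRingType) (Q : R -> Prop) :=
  [/\ Q 0, (forall a b, Q a -> Q b -> Q (a - b)),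
      (forall r a, Q a -> Q (r * a)) & (forall a b, Q (a * b) -> Q a \/ Q b)].

Section CPrime.
Variables (R : comNzRingType) (Q : R -> Prop) (hQ : cprime Q).
Lemma cp0 : Q 0. Proof. by case: hQ. Qed.
Lemma cpB a b : Q a -> Q b -> Q (a - b). Proof. by case: hQ => _ h _ _; apply: h. Qed.
Lemma cpM r a : Q a -> Q (r * a). Proof. by case: hQ => _ _ h _; apply: h. Qed.
Lemma cpMr r a : Q a -> Q (a * r). Proof. by rewrite mulrC; apply: cpM. Qed.
Lemma cpP a b : Q (a * b) -> Q a \/ Q b. Proof. by case: hQ => _ _ _ h; apply: h. Qed.
Lemma cpN a : Q a -> Q (- a). Proof. by move=> h; rewrite -sub0r; apply: cpB => //; apply: cp0. Qed.
Lemma cpD a b : Q a -> Q b -> Q (a + b).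
Proof. by move=> ha hb; rewrite -[b]opprK; apply: cpB => //; apply: cpN. Qed.
Lemma cp_sum (I : Type) (s : seq I) (P : pred I) (f : I -> R) :
  (forall i, P i -> Q (f i)) -> Q (\sum_(i <- s | P i) f i).
Proof. by move=> h; apply: big_ind => //; [apply: cp0 | apply: cpD]. Qed.
Lemma cpX a k : Q (a ^+ k) -> Q a.
Proof.
elim: k => [|k IH]; last by rewrite exprS => /cpP [] // /IH.
by rewrite expr0 => h1; rewrite -[a]mulr1; apply: cpM.
Qed.
End CPrime.

Lemma minP (P : nat -> Prop) : (exists k, P k) -> exists k, P k /\ forall j, (j < k)%N -> ~ P j.
Proof.
move=> [k Pk]; elim: k {-2}k (leqnn k) Pk => [|N IH] k hk Pk.
  by exists k; split => // j hj; have := leq_trans hj hk.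
case: (classic (exists j, (j < k)%N /\ P j)) => [[j [hj Pj]]|hn].
  by apply: (IH j) => //; rewrite -ltnS (leq_trans hj hk).
by exists k; split => // j hj Pj; apply: hn; exists j.
Qed.

Section Step.
Variables (F : closedFieldType) (D : idomainType) (T : Type) (ev : T -> {rmorphism D -> F}).
Hypothesis IH : forall Q' : D -> Prop, cprime Q' -> forall d, ~ Q' d ->
  exists t, (forall e, Q' e -> ev t e = 0) /\ ev t d != 0.

Lemma pdiv (p d : {poly D}) : d != 0 ->
  exists k q r, lead_coef d ^+ k *: p = q * d + r /\ (size r < size d)%N.
Proof.
move=> dn0; exists (Pdiv.Idomain.scalp p d), (Pdiv.Idomain.divp p d), (Pdiv.Idomain.modp p d).
split; [exact: Pdiv.Idomain.divp_eq | exact: Pdiv.Idomain.ltn_modpN0].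
Qed.

Lemma step (Q : {poly D} -> Prop) : cprime Q -> forall g, ~ Q g ->
  exists t c, (forall P, Q P -> (map_poly (ev t) P).[c] = 0) /\
              (map_poly (ev t) g).[c] != 0.
Proof.
move=> hQ g Qg.
pose Q' d := Q d%:P.
have hQ' : cprime Q'.
  split; rewrite /Q'.
  - by rewrite polyC0; apply: cp0.
  - by move=> a b ha hb; rewrite polyCB; apply: cpB.
  - by move=> r a ha; rewrite polyCM; apply: cpM.
  - by move=> a b; rewrite polyCM; apply: cpP.
pose inQt (P : {poly D}) := forall j, Q' P`_j.
have Qt_Q (P : {poly D}) : inQt P -> Q P.
  move=> hP; rewrite -[P]coefK poly_def; apply: (cp_sum hQ) => i _.
  by rewrite -mul_polyC; apply: (cpMr hQ); apply: hP.
have Qt_M (R P : {poly D}) : inQt P -> inQt (R * P).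
  move=> hP j; rewrite coefM; apply: (cp_sum hQ') => i _; exact: (cpM hQ').
have Qt_B (P R : {poly D}) : inQt P -> inQt R -> inQt (P - R).
  by move=> hP hR j; rewrite coefB; apply: (cpB hQ').
have Qt_mono a k : Q' a -> inQt (a *: 'X^k).
  move=> ha j; rewrite coefZ coefXn; case: (j == k); rewrite ?mulr1 ?mulr0 //.
  exact: (cp0 hQ').
have strip (P : {poly D}) : P != 0 -> (size (P - lead_coef P *: 'X^((size P).-1))%R < size P)%N.
  move=> Pn0; rewrite [X in (_ < X)%N](polySpred Pn0) ltnS.
  apply/leq_sizeP => j hj; rewrite coefB coefZ coefXn.
  case: eqP => [->|/eqP ne]; first by rewrite mulr1 subrr.
  rewrite mulr0 subr0.
  have hs : (size P <= j)%N by rewrite (polySpred Pn0) ltn_neqAle eq_sym ne hj.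
  by move/leq_sizeP: hs => ->.
have lc_nz (P : {poly D}) : ~ Q' (lead_coef P) -> lead_coef P != 0.
  by move=> h; apply/eqP => e; apply: h; rewrite e; apply: (cp0 hQ').
have E_M (t : T) c P R : (map_poly (ev t) (P * R)).[c] =
    (map_poly (ev t) P).[c] * (map_poly (ev t) R).[c].
  by rewrite rmorphM hornerM.
have E_D (t : T) c P R : (map_poly (ev t) (P + R)).[c] =
    (map_poly (ev t) P).[c] + (map_poly (ev t) R).[c].
  by rewrite rmorphD hornerD.
have E_C (t : T) c a : (map_poly (ev t) a%:P).[c] = ev t a.
  by rewrite map_polyC hornerC.
have E_Qt (t : T) c P : (forall e, Q' e -> ev t e = 0) -> inQt P ->
    (map_poly (ev t) P).[c] = 0.
  move=> hv hP; suff -> : map_poly (ev t) P = 0 by rewrite horner0.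
  by apply/polyP => j; rewrite coef_map coef0; apply: hv; apply: hP.
case: (classic (exists P, Q P /\ ~ inQt P)) => [hbad|hgood]; last first.
  have : ~ inQt g by move=> /Qt_Q.
  move=> /not_all_ex_not [j hj].
  have [t [hv ht]] := IH hQ' hj.
  set G := map_poly (ev t) g.
  have Gn0 : G != 0 by apply/eqP => e; move: ht; rewrite -coef_map -/G e coef0 eqxx.
  have : size (G * 'X - 1) != 1.
    rewrite size_polyDl ?size_mulX //; first by rewrite eqSS size_poly_eq0.
    by rewrite size_polyN size_polyC oner_neq0 ltnS lt0n size_poly_eq0.
  move=> /closed_rootP [c /rootP]; rewrite hornerD hornerN hornerMX hornerC => hc.
  exists t, c; split.
    move=> P QP; apply: E_Qt => // i.
    by apply: NNPP => hn; apply: hgood; exists P; split => // h; apply: hn; apply: h.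
  apply/eqP => e; move: hc; rewrite e mul0r sub0r => /eqP; rewrite oppr_eq0.
  by rewrite oner_eq0.
have [kh [[h [[Qh bh] eh]] hminh]] :=
  minP (P := fun k => exists P, (Q P /\ ~ inQt P) /\ size P = k)
    (let: ex_intro P hP := hbad in ex_intro _ (size P) (ex_intro _ P (conj hP erefl))).
subst kh.
have hmin (P : {poly D}) : Q P -> (size P < size h)%N -> inQt P.
  move=> QP hs; apply: NNPP => hn; apply: (hminh _ hs); exists P; split => //.
have hn0 : h != 0.
  by apply/eqP => e; apply: bh; rewrite e => j; rewrite coef0; apply: (cp0 hQ').
have lch : ~ Q' (lead_coef h).
  move=> hl; apply: bh.
  have hm := Qt_mono _ ((size h).-1) hl.
  have := hmin _ (cpB hQ Qh (Qt_Q _ hm)) (strip _ hn0).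
  move=> h1; have := Qt_B _ _ h1 (Qt_B _ _ (Qt_B _ _ hm hm) hm).
  by rewrite subrr sub0r opprK subrK.
have lchn0 := lc_nz _ lch.
have sh2 : (1 < size h)%N.
  rewrite ltnNge; apply/negP => hs; apply: bh.
  rewrite (size1_polyC hs) => j; rewrite coefC; case: (j == 0%N); last exact: (cp0 hQ').
  by rewrite /Q' -(size1_polyC hs).
pose S (P : {poly D}) := exists u s, Q s /\ P = u * g + s.
have S_Q (P M : {poly D}) : S P -> Q M -> S (M - P).
  move=> [u [s [Qs ->]]] QM; exists (- u), (M - s); split; first exact: cpB.
  by ring.
have S_M (R P : {poly D}) : S P -> S (R * P).
  move=> [u [s [Qs ->]]]; exists (R * u), (R * s); split; first exact: cpM.
  by rewrite mulrDr mulrA.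
have S_Q' (P M : {poly D}) : S P -> Q M -> S (P - M).
  move=> SP QM; have := S_Q _ _ (S_Q _ _ SP QM) (cp0 hQ).
  by rewrite sub0r opprB.
have Sg : S g by exists 1, 0; split; [exact: (cp0 hQ) | rewrite mul1r addr0].
have [kp [[p [[Sp Qp] ep]] hminp]] :=
  minP (P := fun k => exists P, (S P /\ ~ Q P) /\ size P = k)
    (ex_intro _ (size g) (ex_intro _ g (conj (conj Sg Qg) erefl))).
subst kp.
have pmin (P : {poly D}) : S P -> (size P < size p)%N -> Q P.
  move=> SP hs; apply: NNPP => hn; apply: (hminp _ hs); exists P; split => //.
have pn0 : p != 0 by apply/eqP => e; apply: Qp; rewrite e; apply: (cp0 hQ).
have sp1 : size p = 1%N.
  apply/eqP; apply: NNPP => /negP hs.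
  have sp2 : (1 < size p)%N.
    by rewrite ltn_neqAle eq_sym hs lt0n size_poly_eq0.
  have lcp : ~ Q' (lead_coef p).
    move=> hl; apply: Qp.
    have hm := Qt_Q _ (Qt_mono _ ((size p).-1) hl).
    have := cpD hQ (pmin _ (S_Q' _ _ Sp hm) (strip _ pn0)) hm.
    by rewrite subrK.
  have lcpn0 := lc_nz _ lcp.
  case: (leqP (size p) (size h)) => hph.
  - have [k [q [r [hdiv hr]]]] := pdiv h pn0.
    have Sr : S r.
      have := S_Q _ _ (S_M q _ Sp) (cpM hQ (lead_coef p ^+ k)%:P Qh).
      by rewrite mul_polyC hdiv addrC addKr.
    have Qr := pmin _ Sr hr.
    have Qqp : Q (q * p).
      have := cpB hQ (cpM hQ (lead_coef p ^+ k)%:P Qh) Qr.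
      by rewrite mul_polyC hdiv addrK.
    have Qq : Q q by case: (cpP hQ Qqp) => // /Qp.
    have lckn0 : lead_coef p ^+ k != 0 by rewrite expf_neq0.
    have szqp : size (q * p) = size h.
      have -> : q * p = lead_coef p ^+ k *: h - r by rewrite hdiv addrK.
      rewrite size_polyDl ?size_scale // size_polyN.
      exact: leq_trans hr hph.
    have qn0 : q != 0.
      by apply/eqP => e; move: szqp; rewrite e mul0r size_poly0 => e2; move: sh2; rewrite -e2.
    have Qtq : inQt q.
      apply: hmin => //; move: szqp; rewrite size_mul // => <-.
      move: sp2; case: (size p) => [|[|m]] //= _.
      by rewrite !addnS /= ltnS leq_addr.
    have eqp : q * p = lead_coef p ^+ k *: h - r by rewrite hdiv addrK.
    have := Qt_M p q Qtq ((size h).-1); rewrite mulrC eqp coefB coefZ.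
    have -> : r`_(size h).-1 = 0.
      apply/leq_sizeP; last exact: leqnn.
      by rewrite -ltnS (prednK (ltnW sh2)) (leq_trans hr hph).
    rewrite subr0 -lead_coefE => /(cpP hQ') [|//].
    by move/(cpX hQ').
  - have [k [q [r [hdiv hr]]]] := pdiv p hn0.
    have Sr : S r.
      have := S_Q' _ _ (S_M (lead_coef h ^+ k)%:P _ Sp) (cpM hQ q Qh).
      by rewrite mul_polyC hdiv addrC addKr.
    have Qr := pmin _ Sr (ltn_trans hr hph).
    have := cpD hQ (cpM hQ q Qh) Qr; rewrite -hdiv -mul_polyC => /(cpP hQ) [|//].
    by rewrite /Q' => /(cpX hQ').
have [r0 r0n0 pr0] : exists2 r0, r0 != 0 & p = r0%:P.
  by apply/size_poly1P; rewrite sp1.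
have Qr0 : ~ Q' r0 by rewrite /Q' -pr0.
have [u [s [Qs ps]]] := Sp.
have Qd : ~ Q' (r0 * lead_coef h) by move/(cpP hQ') => [].
have [t [hv ht]] := IH hQ' Qd.
rewrite rmorphM mulf_eq0 negb_or in ht; case/andP: ht => ht1 ht2.
set H := map_poly (ev t) h.
have szH : size H = size h by rewrite size_map_poly_id0.
have : size H != 1%N by rewrite szH; case: (size h) sh2 => // -[].
move=> /closed_rootP [c /rootP hc].
have van (P : {poly D}) : Q P -> (map_poly (ev t) P).[c] = 0.
  move=> QP; have [k [q [r [hdiv hr]]]] := pdiv P hn0.
  have Qr : Q r.
    have := cpB hQ (cpM hQ (lead_coef h ^+ k)%:P QP) (cpM hQ q Qh).
    by rewrite mul_polyC hdiv addrC addKr.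
  have Er := E_Qt t c r hv (hmin _ Qr hr).
  have := congr1 (fun X => (map_poly (ev t) X).[c]) hdiv => /=.
  rewrite -mul_polyC E_D !E_M E_C hc Er mulr0 addr0 => /eqP.
  rewrite mulf_eq0 rmorphXn expf_eq0 (negbTE ht2) andbF /= => /eqP //.
exists t, c; split => //.
apply/eqP => eg; move: ht1.
have := congr1 (fun X => (map_poly (ev t) X).[c]) ps => /=.
by rewrite pr0 E_C E_D E_M eg mulr0 add0r van // => ->; rewrite eqxx.
Qed.

End Step.

Local Notation widen := (widen_ord (leqnSn _)).
Section T.
Variables (R : comNzRingType) (n : nat).
Lemma muniXw (j : 'I_n) : muni ('X_(widen j) : {mpoly R[n.+1]}) = ('X_j)%:P.
Proof.
rewrite /muni mmapX mmap1U /=.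
case: splitP => [k eq|k].
  by congr ('X__)%:P; apply/val_inj=> /=; rewrite -eq.
by rewrite ord1 /= addn0 => /eqP /=; rewrite ltn_eqF.
Qed.
Lemma muniXm : muni ('X_ord_max : {mpoly R[n.+1]}) = 'X.
Proof.
rewrite /muni mmapX mmap1U /=.
case: splitP=> //; case=> j lt_jn /eqP /=.
by have := lt_jn; rewrite ltn_neqAle eq_sym=> /andP[/negbTE->].
Qed.
End T.
Lemma mpoly_rmorph_eq (R : comNzRingType) (k : nat) (S : nzRingType)
  (f g : {rmorphism {mpoly R[k]} -> S}) :
  (forall c, f c%:MP = g c%:MP) -> (forall i, f 'X_i = g 'X_i) ->
  forall p, f p = g p.
Proof.
move=> hC hX p; rewrite (mpolyE p) !rmorph_sum; apply: eq_bigr => m _.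
rewrite -mul_mpolyC !rmorphM hC; congr (_ * _).
rewrite mpolyXE_id !rmorph_prod; apply: eq_bigr => i _.
by rewrite !rmorphXn hX.
Qed.

Section T2.
Variables (R : comNzRingType) (n : nat).
Definition mm (P : {poly {mpoly R[n]}}) : {mpoly R[n.+1]} :=
  (horner_eval 'X_ord_max \o map_poly (@mwiden n R)) P.

Lemma mwidenXU (j : 'I_n) : mwiden ('X_j : {mpoly R[n]}) = 'X_(widen j).
Proof. by rewrite /mwiden mmapX mmap1U. Qed.

Lemma ord_cases (i : 'I_n.+1) : i = ord_max \/ exists j : 'I_n, i = widen j.
Proof.
case: (unliftP ord_max i) => [j ->|->]; last by left.
right; exists j; apply/val_inj => /=; rewrite /bump.
by rewrite leqNgt ltn_ord.
Qed.

Lemma mm_muni p : mm (muni p) = p.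
Proof.
have := @mpoly_rmorph_eq R n.+1 _
  ((horner_eval 'X_ord_max \o map_poly (@mwiden n R)) \o (@muni n R)) idfun.
apply => [c|i] /=.
  by rewrite muniC map_polyC /= horner_evalE hornerC mwidenC.
case: (ord_cases i) => [->|[j ->]].
  by rewrite muniXm map_polyX horner_evalE hornerX.
by rewrite muniXw map_polyC horner_evalE hornerC; apply: mwidenXU.
Qed.

Lemma meval_muni (a : 'I_n.+1 -> R) p :
  p.@[a] = (map_poly (meval (fun j => a (widen j))) (muni p)).[a ord_max].
Proof.
have := @mpoly_rmorph_eq R n.+1 _ (meval a)
  ((horner_eval (a ord_max) \o map_poly (meval (fun j => a (widen j)))) \o (@muni n R)).
apply => [c|i] /=.
  by rewrite muniC map_polyC /= horner_evalE hornerC !mevalC.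
case: (ord_cases i) => [->|[j ->]].
  by rewrite muniXm map_polyX horner_evalE hornerX mevalXU.
rewrite muniXw map_polyC horner_evalE hornerC mevalXU; symmetry; exact: mevalXU.
Qed.
End T2.

Lemma NS (F : closedFieldType) (n : nat) : forall Q : {mpoly F[n]} -> Prop,
  cprime Q -> forall g, ~ Q g ->
  exists a : 'I_n -> F, (forall p, Q p -> p.@[a] = 0) /\ g.@[a] != 0.
Proof.
elim: n => [|n IHn] Q hQ g Qg.
  pose a : 'I_0 -> F := fun i => 0.
  have e0 (p : {mpoly F[0]}) : p = (p.@[a])%:MP.
    have := @mpoly_rmorph_eq F 0 _ idfun ((@mpolyC 0 F) \o (meval a)).
    apply => [c|[]//] /=; by rewrite mevalC.
  have gn0 : g.@[a] != 0.
    by apply/eqP => e; apply: Qg; rewrite [g]e0 e; apply: (cp0 hQ).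
  exists a; split => // p Qp; apply/eqP; apply: contraT => pn0.
  exfalso; apply: Qg; rewrite [g]e0.
  have -> : (g.@[a])%:MP = (g.@[a] / p.@[a])%:MP * p.
    by rewrite {2}[p]e0 -rmorphM /= mulfVK.
  exact: (cpM hQ).
pose Qh (P : {poly {mpoly F[n]}}) := Q (mm P).
have hQh : cprime Qh.
  rewrite /Qh /mm; split.
  - by rewrite rmorph0; apply: (cp0 hQ).
  - by move=> a b ha hb; rewrite rmorphB; apply: (cpB hQ).
  - by move=> r a ha; rewrite rmorphM; apply: (cpM hQ).
  - by move=> a b; rewrite rmorphM; apply: (cpP hQ).
have Qhg : ~ Qh (muni g) by rewrite /Qh mm_muni.
have := @step F {mpoly F[n]} ('I_n -> F) (fun a => meval a) IHn Qh hQh (muni g) Qhg.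
move=> [t [c [hv hg]]].
pose a (i : 'I_n.+1) : F := if insub (val i) is Some j then t j else c.
have ea : (fun j : 'I_n => a (widen j)) = t.
  by apply: functional_extensionality => j; rewrite /a /= valK.
have ec : a ord_max = c by rewrite /a insubF //= ltnn.
exists a; split.
  move=> p Qp; rewrite meval_muni ea ec; apply: hv.
  by rewrite /Qh mm_muni.
by rewrite meval_muni ea ec.
Qed.

Section TSI.
Variables (A : nzRingType) (P : A -> Prop) (hP : two_sided_ideal P).
Lemma ts0 : P 0. Proof. by case: hP. Qed.
Lemma tsB a b : P a -> P b -> P (a - b). Proof. by case: hP => _ h _ _; apply: h. Qed.
Lemma tsM r a : P a -> P (r * a). Proof. by case: hP => _ _ h _; apply: h. Qed.
Lemma tsMr r a : P a -> P (a * r). Proof. by case: hP => _ _ _ h; apply: h. Qed.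
Lemma tsN a : P a -> P (- a). Proof. by move=> h; rewrite -sub0r; apply: tsB => //; apply: ts0. Qed.
Lemma tsD a b : P a -> P b -> P (a + b).
Proof. by move=> ha hb; rewrite -[b]opprK; apply: tsB => //; apply: tsN. Qed.
Lemma ts_sum (I : Type) (s : seq I) (Pr : pred I) (f : I -> A) :
  (forall i, Pr i -> P (f i)) -> P (\sum_(i <- s | Pr i) f i).
Proof. by move=> h; apply: big_ind => //; [apply: ts0 | apply: tsD]. Qed.
Lemma tsMcong a b c d : P (a - b) -> P (c - d) -> P (a * c - b * d).
Proof.
move=> h1 h2; have -> : a * c - b * d = (a - b) * c + b * (c - d).
  by rewrite mulrBl mulrBr addrA subrK.
by apply: tsD; [apply: tsMr | apply: tsM].
Qed.
End TSI.

Lemma gen_ideal_ts (A : nzRingType) (S : A -> Prop) : two_sided_ideal (gen_ideal S).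
Proof.
split.
- by move=> Q hQ _; apply: (ts0 hQ).
- by move=> a b ha hb Q hQ hS; apply: (tsB hQ); [apply: ha | apply: hb].
- by move=> r a ha Q hQ hS; apply: (tsM hQ); apply: ha.
- by move=> r a ha Q hQ hS; apply: (tsMr hQ); apply: ha.
Qed.

Lemma radical_ts (A : nzRingType) (I : A -> Prop) : two_sided_ideal (radical I).
Proof.
split.
- by move=> Q [hQ _ _] _; apply: (ts0 hQ).
- by move=> a b ha hb Q hQ hS; case: (hQ) => hQ' _ _; apply: (tsB hQ'); [apply: ha | apply: hb].
- by move=> r a ha Q hQ hS; case: (hQ) => hQ' _ _; apply: (tsM hQ'); apply: ha.
- by move=> r a ha Q hQ hS; case: (hQ) => hQ' _ _; apply: (tsMr hQ'); apply: ha.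
Qed.

Section Points.
Variables (F : closedFieldType) (A : nzRingType) (n : nat).
Variables (iota : {rmorphism F -> A}) (x : 'I_n -> A).
Hypothesis surj : forall b : A, exists p : {mpoly F[n]}, b = lin_mon iota x p.

Lemma point_cong (z : 'I_n -> F) (b : A) :
  exists c : F, point_ideal iota x z (b - iota c).
Proof.
have hP := gen_ideal_ts (fun a => exists i, a = x i - iota (z i)).
have [p ->] := surj b; exists p.@[z].
rewrite /lin_mon /mmap mevalE rmorph_sum /= -sumrB.
apply: (ts_sum hP) => m _; rewrite rmorphM /= -mulrBr; apply: (tsM hP).
rewrite /mmap1 rmorph_prod /=.
apply: (big_ind2 (fun u v => point_ideal iota x z (u - v))).
- by rewrite subrr; apply: (ts0 hP).
- by move=> ? ? ? ? h1 h2; apply: (tsMcong hP).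
move=> i _; rewrite rmorphXn.
elim: (m i) => [|k IH]; first by rewrite !expr0 subrr; apply: (ts0 hP).
rewrite !exprS; apply: (tsMcong hP) => //.
by move=> Q hQ hS; apply: hS; exists i.
Qed.

Lemma point_prime (z : 'I_n -> F) :
  (forall a, point_ideal iota x z a) \/ prime_ideal (point_ideal iota x z).
Proof.
have hP := gen_ideal_ts (fun a => exists i, a = x i - iota (z i)).
case: (classic (forall a, point_ideal iota x z a)) => [h|hn]; [by left | right].
split => // L K hL hK hLK.
case: (classic (Defs.subsetP L (point_ideal iota x z))) => [|hnL]; [by left | right].
have [l [Ll nl]] : exists l, L l /\ ~ point_ideal iota x z l.
  by apply: NNPP => hn2; apply: hnL => a La; apply: NNPP => na; apply: hn2; exists a.
move=> k Kk.
have hlk : point_ideal iota x z (l * k).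
  apply: hLK; exists [:: (l, k)]; split; last by rewrite big_seq1.
  by move=> u; rewrite inE => /eqP ->.
have [c hc] := point_cong z l.
have cn0 : c != 0.
  apply/eqP => c0; apply: nl; move: hc; rewrite c0 rmorph0 subr0 //.
have h2 : point_ideal iota x z (iota c * k).
  have := tsB hP hlk (tsMr hP k hc); rewrite mulrBl.
  by rewrite opprB addrC subrK.
have := tsM hP (iota c^-1) h2; rewrite mulrA -rmorphM mulVf // rmorph1 mul1r //.
Qed.
End Points.

Theorem theorem3p13 (F : closedFieldType) (A : nzRingType) (n : nat)
    (iota : {rmorphism F -> A}) (x : 'I_n -> A) (y : 'I_n -> A)
    (hA : qc_bijective_skewPBW iota x)
    (* Z(A) = F[y_1,...,y_n] with y_1..y_n algebraically independent:
       p |-> p(y_1,...,y_n) is injective with image exactly the center *)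
    (hy_indep : injective (mmap iota y : {mpoly F[n]} -> A))
    (hy_center : forall a : A, center a <-> exists p : {mpoly F[n]}, a = mmap iota y p)
    (I : A -> Prop) (hI : two_sided_ideal I) :
  let J := fun p : {mpoly F[n]} => I (mmap iota y p) in
  (forall a, gen_ideal
       (fun b => exists2 g, I_Z (V_Z J) g & b = mmap iota y g) a ->
     radical I a) /\
  (forall a, radical I a -> I_A iota x (V_A iota x I) a).
Proof.
move=> J; split; last first.
  case: hA => _ [lm_inv lmK lmK'] _ _ _.
  have surj : forall b : A, exists p : {mpoly F[n]}, b = lin_mon iota x p.
    by move=> b; exists (lm_inv b); rewrite lmK'.
  move=> a ra z Vz; case: (point_prime surj z) => [//|hpr].
  by apply: ra => // b Ib; apply: Vz.
move=> a ha; apply: ha; first exact: radical_ts.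
move=> b [g hg ->] P hPr IP.
case: (hPr) => hP _ hpr.
have cen (p : {mpoly F[n]}) : center (mmap iota y p) by apply/hy_center; exists p.
have cenX m : center (mmap1 y m) by rewrite -(mmapX _ iota); apply: cen.
have yM : {morph mmap iota y : u v / u * v}.
  apply: (commr_mmap_is_multiplicative _ _).1.
  - move=> i r; rewrite /GRing.comm; have := cenX (U_(i))%MM; rewrite mmap1U => ->.
    done.
  - by move=> p m m'; rewrite /GRing.comm cenX.
pose Qz (p : {mpoly F[n]}) := P (mmap iota y p).
have hQz : cprime Qz.
  rewrite /Qz; split.
  - by rewrite mmap0; apply: (ts0 hP).
  - by move=> u v hu hv; rewrite mmapB; apply: (tsB hP).
  - by move=> r u hu; rewrite yM; apply: (tsM hP).
  move=> u v; rewrite yM => huv.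
  set mu := mmap iota y u in huv *; set mv := mmap iota y v in huv *.
  pose L w := exists r, w = r * mu.
  pose K w := exists r, w = r * mv.
  have hL : left_ideal L.
    split; first by exists 0; rewrite mul0r.
      by move=> w1 w2 [r1 ->] [r2 ->]; exists (r1 - r2); rewrite mulrBl.
    by move=> s w [r ->]; exists (s * r); rewrite mulrA.
  have hK : left_ideal K.
    split; first by exists 0; rewrite mul0r.
      by move=> w1 w2 [r1 ->] [r2 ->]; exists (r1 - r2); rewrite mulrBl.
    by move=> s w [r ->]; exists (s * r); rewrite mulrA.
  have hLK : Defs.subsetP (ideal_prod L K) P.
    move=> w [s [hs ->]]; rewrite big_seq; apply: (ts_sum hP) => -[u1 u2] /hs /= [[r1 ->] [r2 ->]].
    have -> : r1 * mu * (r2 * mv) = (r1 * r2) * (mu * mv).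
      by rewrite -mulrA [mu * _]mulrA (cen u) !mulrA.
    exact: (tsM hP).
  case: (hpr L K hL hK hLK) => [hsub|hsub]; [left | right]; apply: hsub; exists 1; by rewrite mul1r.
apply: NNPP => nQ.
have [z [hz gz]] := NS hQz nQ.
have Vz : V_Z J z by move=> p Jp; apply: hz; apply: IP.
by move: gz; rewrite (hg z Vz) eqxx.
Qed.
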